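(* Assume Case 4 holds with index $k$. Let $(A,B)=(n_{k-1},m_{k-1})$ and for $n\ge1$ put $(A_n,B_n)=(\gamma_n-(\gamma-A)d^{n-1},\ Bd^{n-1})$ and $(A_n^*,B_n^* )=\big((\delta^{n-1}+\delta^{n-2}B+\cdots+B^{n-1})A,\ B^n\big)$. (i) If $\delta<T_{k-1}$, then for every $n\ge1$, $(A_n,B_n)$ is the vertex of $N(Q^n)$ immediately preceding $(\gamma_n,d^n)$ (in order of increasing $x$-coordinate), the segment joining them has slope $-l_1^{-1}$, and $\delta^n$ is strictly smaller than the $y$-intercept of the line through these two points. (ii) If $\delta=T_{k-1}$, then for every $n\ge1$, $(A_n^*,B_n^* )$ is the vertex of $N(Q^n)$ immediately preceding $(\gamma_n,d^n)$, the segment joining them has slope $-l_1^{-1}$, and $\delta^n$ equals the $y$-intercept of the line through these two points.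
   Context: Let $f(z,w)=(p(z),q(z,w))$ be a holomorphic skew product germ at the origin of $\mathbb{C}^2$ with $f(0,0)=(0,0)$, where $p(z)=a_\delta z^\delta+O(z^{\delta+1})$ with $a_\delta\neq0$ and integer $\delta\ge1$, and $q(z,w)=\sum_{i+j\ge1}b_{ij}z^iw^j$ is not identically zero. For $n\ge1$ write $f^n=(p^n,Q^n)$. The Newton polygon $N(g)$ of a nonzero germ $g=\sum g_{ij}z^iw^j$ is the convex hull of $\bigcup_{g_{ij}\neq0}\{(x,y):x\ge i,\ y\ge j\}$. Let $(n_1,m_1),\dots,(n_s,m_s)$ be the vertices of $N(q)$ with $n_1<\cdots<n_s$, $m_1>\cdots>m_s$; for $1\le k\le s-1$ let $T_k$ be the $y$-intercept of the line through $(n_k,m_k)$ and $(n_{k+1},m_{k+1})$. Case 4 means: $s>2$ and $T_k\le\delta\le T_{k-1}$ for some $2\le k\le s-1$; for this $k$ set $(\gamma,d)=(n_k,m_k)$, $l_1=\frac{n_k-n_{k-1}}{m_{k-1}-m_k}$ and $l_2$ defined by $l_1+l_2=\frac{n_{k+1}-n_k}{m_k-m_{k+1}}$. Define $\gamma_n=\gamma(\delta^{n-1}+\delta^{n-2}d+\cdots+d^{n-1})$. *)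

(* Defs.v *)
From HB Require Import structures.
From mathcomp Require Import all_boot all_order all_algebra.
From mathcomp Require Import reals.
From mathcomp.real_closed Require Import complex.
Set Implicit Arguments. Unset Strict Implicit. Unset Printing Implicit Defensive.
Import Order.TTheory GRing.Theory Num.Theory.
Local Open Scope ring_scope.
Local Open Scope complex_scope.

(** Formal power series in two variables z, w over C = R[i]:
    a series g is represented by its coefficient function (i, j) |-> g_ij,
    the coefficient of z^i w^j. *)
Definition ser (R : realType) := nat -> nat -> R[i].

Section Series.
Variable R : realType.
Local Notation ser := (ser R).

Definition ser_one : ser := fun a b => ((a == 0%N) && (b == 0%N))%:R.
Definition ser_z : ser := fun a b => ((a == 1%N) && (b == 0%N))%:R.
Definition ser_w : ser := fun a b => ((a == 0%N) && (b == 1%N))%:R.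

Definition ser_mul (F G : ser) : ser := fun a b =>
  \sum_(i < a.+1) \sum_(j < b.+1) F i j * G (a - i)%N (b - j)%N.

Definition ser_pow (F : ser) (n : nat) : ser := iter n (ser_mul F) ser_one.

(** Formal substitution g(P, Q) = sum_{i,j} g_ij P^i Q^j, for series P, Q
    without constant term (then only the terms with i + j <= a + b
    contribute to the coefficient of z^a w^b, so the sum is finite). *)
Definition ser_comp (g P Q : ser) : ser := fun a b =>
  \sum_(i < (a + b).+1) \sum_(j < (a + b).+1)
     g i j * ser_mul (ser_pow P i) (ser_pow Q j) a b.

Definition ser_of1 (pc : nat -> R[i]) : ser := fun a b => if b == 0%N then pc a else 0.

(** Iterates of the skew product f = (p, q): f^0 = id, f^(n+1) = f o f^n,
    so that f^n = (p^n, Q^n). *)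
Definition skew_iter (pc : nat -> R[i]) (q : ser) (n : nat) : ser * ser :=
  iter n (fun PQ => (ser_comp (ser_of1 pc) PQ.1 PQ.2, ser_comp q PQ.1 PQ.2))
       (ser_z, ser_w).

Definition Qn (pc : nat -> R[i]) (q : ser) (n : nat) : ser := (skew_iter pc q n).2.

(** Convergence (holomorphic germ): Cauchy-type coefficient bounds. *)
Definition convergent1 (pc : nat -> R[i]) : Prop :=
  exists M : R, forall i, `|pc i| <= (M ^+ i.+1)%:C.
Definition convergent2 (g : ser) : Prop :=
  exists M : R, forall i j, `|g i j| <= (M ^+ (i + j).+1)%:C.

Definition quadrants (g : ser) (x : R * R) : Prop :=
  exists i j, g i j != 0 /\ (i%:R <= x.1) /\ (j%:R <= x.2).

Definition convex_hull (P : R * R -> Prop) (x : R * R) : Prop :=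
  exists (n : nat) (lam : 'I_n -> R) (pt : 'I_n -> R * R),
    (forall t, 0 <= lam t) /\ \sum_t lam t = 1 /\ (forall t, P (pt t)) /\
    x = (\sum_t lam t * (pt t).1, \sum_t lam t * (pt t).2).

Definition newton (g : ser) : R * R -> Prop := convex_hull (quadrants g).

Definition is_vertex (N : R * R -> Prop) (v : R * R) : Prop :=
  N v /\ forall (x y : R * R) (t : R), N x -> N y -> 0 < t < 1 ->
    v = (t * x.1 + (1 - t) * y.1, t * x.2 + (1 - t) * y.2) -> x = y.

Definition prec_vertex (N : R * R -> Prop) (u v : R * R) : Prop :=
  is_vertex N u /\ is_vertex N v /\ u.1 < v.1 /\
  forall w, is_vertex N w -> ~ (u.1 < w.1 /\ w.1 < v.1).

Definition slope (P1 P2 : R * R) : R := (P2.2 - P1.2) / (P2.1 - P1.1).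
Definition yintercept (P1 P2 : R * R) : R := P1.2 - slope P1 P2 * P1.1.

Definition gsum (a b : R) (n : nat) : R :=
  \sum_(i < n) a ^+ (n.-1 - i) * b ^+ i.

End Series.

(* Main.v *)
Require Import Defs.
From HB Require Import structures.
From mathcomp Require Import all_boot all_order all_algebra.
From mathcomp Require Import reals.
From mathcomp.real_closed Require Import complex.
From mathcomp Require Import ring lra zify.
Import Order.TTheory GRing.Theory Num.Theory.
Local Open Scope ring_scope.
Local Open Scope complex_scope.
Set Implicit Arguments. Unset Strict Implicit. Unset Printing Implicit Defensive.
Section S1.
Variable R : realType.

Definition w (l : R) (a b : nat) : R := a%:R + l * b%:R.

Lemma sum2_nz n m (f : nat -> nat -> R[i]) :
  \sum_(i < n) \sum_(j < m) f i j != 0 -> exists i j, (i < n)%N /\ (j < m)%N /\ f i j != 0.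
Proof.
move=> H.
case: (boolP [exists i : 'I_n, exists j : 'I_m, f i j != 0]).
- by move=> /existsP [i /existsP [j Hij]]; exists i, j; rewrite !ltn_ord.
- rewrite negb_exists => /forallP Hall; move: H.
  rewrite big1 ?eqxx //= => i _; rewrite big1 // => j _.
  by move: (Hall i); rewrite negb_exists => /forallP /(_ j); rewrite negbK => /eqP.
Qed.

Lemma sum2_single n m (f : nat -> nat -> R[i]) i0 j0 : (i0 < n)%N -> (j0 < m)%N ->
  (forall i j, (i < n)%N -> (j < m)%N -> f i j != 0 -> i = i0 /\ j = j0) ->
  \sum_(i < n) \sum_(j < m) f i j = f i0 j0.
Proof.
move=> Hi Hj H.
rewrite (bigD1 (Ordinal Hi)) //= [X in _ + X]big1 ?addr0; last first.
  move=> i Hne; apply: big1 => j _; apply/eqP/negPn/negP => Hnz.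
  have [E _] := H i j (ltn_ord i) (ltn_ord j) Hnz.
  by move: Hne; rewrite (_ : i = Ordinal Hi) ?eqxx //; apply: val_inj.
rewrite (bigD1 (Ordinal Hj)) //= [X in _ + X]big1 ?addr0 // => j Hne; apply/eqP/negPn/negP => Hnz.
have [_ E] := H i0 j Hi (ltn_ord j) Hnz.
by move: Hne; rewrite (_ : j = Ordinal Hj) ?eqxx //; apply: val_inj.
Qed.

Definition EdgeP (F : ser R) (l : R) (pa pb va vb : nat) : Prop :=
  [/\ F pa pb != 0, F va vb != 0, w l pa pb = w l va vb,
     (forall a b, F a b != 0 -> w l pa pb <= w l a b) &
     (forall a b, F a b != 0 -> w l a b = w l pa pb -> (pa <= a <= va)%N)].

Lemma mul_supp (F G : ser R) a b : ser_mul F G a b != 0 ->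
  exists i j, (i <= a)%N /\ (j <= b)%N /\ F i j != 0 /\ G (a-i)%N (b-j)%N != 0.
Proof.
rewrite /ser_mul => /(@sum2_nz _ _ (fun i j => F i j * G (a-i)%N (b-j)%N)) [i [j [Hi [Hj]]]].
rewrite mulf_eq0 negb_or => /andP[H1 H2].
by exists i, j; rewrite -ltnS Hi -ltnS Hj.
Qed.

Lemma wD l a1 b1 a2 b2 : w l (a1 + a2) (b1 + b2) = w l a1 b1 + w l a2 b2.
Proof. rewrite /w !natrD; ring. Qed.

Lemma wB l a b i j : (i <= a)%N -> (j <= b)%N -> w l (a - i) (b - j) = w l a b - w l i j.
Proof. move=> Hi Hj; rewrite /w !natrB //; ring. Qed.

Lemma w_inj l i j j' : 0 < l -> w l i j = w l i j' -> j = j'.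
Proof.
move=> l0; rewrite /w => /addrI /(mulfI (lt0r_neq0 l0)) /eqP.
by rewrite eqr_nat => /eqP.
Qed.

Lemma eq_le_tmp (x y : R) : x = y -> x <= y.
Proof. by move=> ->. Qed.

Lemma mulEdge F G l pa1 pb1 va1 vb1 pa2 pb2 va2 vb2 : 0 < l ->
  EdgeP F l pa1 pb1 va1 vb1 -> EdgeP G l pa2 pb2 va2 vb2 ->
  EdgeP (ser_mul F G) l (pa1+pa2) (pb1+pb2) (va1+va2) (vb1+vb2).
Proof.
move=> l0 [F1 F2 Fe Fs Fl] [G1 G2 Ge Gs Gl].
have key : forall a b i j, (i <= a)%N -> (j <= b)%N -> F i j != 0 ->
    G (a-i)%N (b-j)%N != 0 -> w l a b <= w l (pa1+pa2) (pb1+pb2) ->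
    [/\ w l i j = w l pa1 pb1, w l (a-i) (b-j) = w l pa2 pb2,
        (pa1 <= i <= va1)%N & (pa2 <= a - i <= va2)%N].
  move=> a b i j Hi Hj Hf Hg Hw.
  have h1 := Fs _ _ Hf; have h2 := Gs _ _ Hg.
  move: Hw; rewrite wD; rewrite (wB l Hi Hj) in h2 * => Hw.
  have e1 : w l i j = w l pa1 pb1 by lra.
  have e2 : w l a b - w l i j = w l pa2 pb2 by lra.
  split.
  - exact: e1.
  - exact: e2.
  - exact: Fl Hf e1.
  - by apply: Gl Hg _; rewrite (wB l Hi Hj).
split.
- rewrite /ser_mul (@sum2_single _ _ (fun i j => F i j * G (pa1+pa2 - i)%N (pb1+pb2-j)%N) pa1 pb1).
  + by rewrite !addKn mulf_neq0.
  + by rewrite ltnS leq_addr.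
  + by rewrite ltnS leq_addr.
  move=> i j; rewrite !ltnS => Hi Hj; rewrite mulf_eq0 negb_or => /andP[Hf Hg].
  have [e1 e2 /andP[Hi1 _] /andP[Hi2 _]] := key _ _ _ _ Hi Hj Hf Hg (lexx _).
  have ei : i = pa1 by lia.
  by subst i; split=> //; exact: w_inj l0 e1.
- rewrite /ser_mul (@sum2_single _ _ (fun i j => F i j * G (va1+va2 - i)%N (vb1+vb2-j)%N) va1 vb1).
  + by rewrite !addKn mulf_neq0.
  + by rewrite ltnS leq_addr.
  + by rewrite ltnS leq_addr.
  move=> i j; rewrite !ltnS => Hi Hj; rewrite mulf_eq0 negb_or => /andP[Hf Hg].
  have Hw : w l (va1 + va2) (vb1 + vb2) <= w l (pa1 + pa2) (pb1 + pb2) by rewrite !wD Fe Ge.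
  have [e1 e2 /andP[_ Hi1] /andP[_ Hi2]] := key _ _ _ _ Hi Hj Hf Hg Hw.
  have ei : i = va1 by lia.
  by subst i; split=> //; exact: w_inj l0 (etrans e1 Fe).
- by rewrite !wD Fe Ge.
- move=> a b /mul_supp [i [j [Hi [Hj [Hf Hg]]]]].
  have := Fs _ _ Hf; have := Gs _ _ Hg; rewrite wB // wD; lra.
- move=> a b /mul_supp [i [j [Hi [Hj [Hf Hg]]]]] Hw.
  have [_ _ /andP[? ?] /andP[? ?]] := key _ _ _ _ Hi Hj Hf Hg (eq_le_tmp Hw).
  lia.
Qed.

Lemma oneEdge l : EdgeP (ser_one R) l 0 0 0 0.
Proof.
have H1 : ser_one R 0 0 != 0 :> R[i] by rewrite /ser_one /= oner_neq0.
split=> // a b; rewrite /ser_one; case: a => [|a]; case: b => [|b] //=; rewrite ?eqxx //.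
Qed.

Lemma powEdge F l pa pb va vb : 0 < l -> EdgeP F l pa pb va vb ->
  forall i, EdgeP (ser_pow F i) l (i*pa) (i*pb) (i*va) (i*vb).
Proof.
move=> l0 EF; elim=> [|i IH]; first by rewrite !mul0n; exact: oneEdge.
rewrite !mulSn; exact: mulEdge l0 EF IH.
Qed.

Lemma eT l mu (pa qa qb i j : nat) : w l qa qb = mu * pa%:R ->
  w l (i*pa + j*qa) (j*qb) = pa%:R * w mu i j.
Proof.
rewrite /w => Hm.
have {Hm}Hm : (qa%:R : R) = mu * pa%:R - l * qb%:R by rewrite -Hm; ring.
rewrite natrD !natrM Hm; ring.
Qed.

Lemma key_lr (mu pa qa qb l ii jj gi gj : R) :
  qa + l*qb = mu*pa -> ii + mu*jj = gi + mu*gj ->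
  mu * ((ii*pa + jj*qa) - (gi*pa + gj*qa)) = (ii - gi) * (l * qb).
Proof.
move=> Hq Hl.
rewrite (_ : mu * _ = mu*pa*(ii-gi) + (mu*jj - mu*gj)*qa); last by ring.
rewrite (_ : mu*jj - mu*gj = gi - ii); last by lra.
rewrite -Hq; ring.
Qed.

Lemma comp_supp (g P Q : ser R) a b : ser_comp g P Q a b != 0 ->
  exists i j, g i j != 0 /\ ser_mul (ser_pow P i) (ser_pow Q j) a b != 0.
Proof.
rewrite /ser_comp => /(@sum2_nz _ _ (fun i j => g i j * ser_mul (ser_pow P i) (ser_pow Q j) a b)).
move=> [i [j [_ [_]]]]; rewrite mulf_eq0 negb_or => /andP[H1 H2].
by exists i, j.
Qed.

Lemma natr_le (m n : nat) : (m%:R <= n%:R :> R) -> (m <= n)%N.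
Proof. by rewrite ler_nat. Qed.

Lemma compEdge (g P Q : ser R) l mu (pa qpa qpb qva qvb gpi gpj gvi gvj : nat) :
  0 < l -> (0 < pa)%N -> (0 < qpb)%N -> (0 < qvb)%N ->
  EdgeP P l pa 0 pa 0 -> EdgeP Q l qpa qpb qva qvb ->
  w l qpa qpb = mu * pa%:R -> EdgeP g mu gpi gpj gvi gvj ->
  EdgeP (ser_comp g P Q) l (gpi*pa + gpj*qpa) (gpj*qpb) (gvi*pa + gvj*qva) (gvj*qvb).
Proof.
move=> l0 pa0 qpb0 qvb0 EP EQ Hmu [g1 g2 ge gs gl].
have [_ _ Qe _ _] := EQ.
have Hmv : w l qva qvb = mu * pa%:R by rewrite -Qe.
have pa0r : 0 < (pa%:R : R) by rewrite ltr0n.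
have qpbr : 0 < l * qpb%:R by rewrite mulr_gt0 // ltr0n.
have qvbr : 0 < l * qvb%:R by rewrite mulr_gt0 // ltr0n.
have mu0 : 0 < mu.
  have : 0 < mu * pa%:R by rewrite -Hmu /w; have := ler0n R qpa; lra.
  by rewrite pmulr_lgt0.
have ET i j : EdgeP (ser_mul (ser_pow P i) (ser_pow Q j)) l
    (i*pa + j*qpa) (j*qpb) (i*pa + j*qva) (j*qvb).
  by have := mulEdge l0 (powEdge l0 EP i) (powEdge l0 EQ j); rewrite muln0 add0n.
have Hq1 : qpa%:R + l * qpb%:R = mu * pa%:R :> R by rewrite -Hmu.
have Hq2 : qva%:R + l * qvb%:R = mu * pa%:R :> R by rewrite -Hmv.
have term : forall a b i j, g i j != 0 ->
    ser_mul (ser_pow P i) (ser_pow Q j) a b != 0 ->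
    w l a b <= pa%:R * w mu gpi gpj ->
    [/\ w mu i j = w mu gpi gpj, w l a b = pa%:R * w mu gpi gpj,
        (gpi <= i <= gvi)%N & (i*pa + j*qpa <= a <= i*pa + j*qva)%N].
  move=> a b i j Hg HT Hw.
  have [_ _ _ Ts Tl] := ET i j.
  have h1 := Ts _ _ HT; rewrite (eT _ _ Hmu) in h1.
  have h2 := gs _ _ Hg.
  have h3 : pa%:R * w mu gpi gpj <= pa%:R * w mu i j by rewrite ler_pM2l.
  have e1 : w mu i j = w mu gpi gpj.
    apply/eqP; rewrite eq_le h2 andbT -(ler_pM2l pa0r); lra.
  have e2 : w l a b = pa%:R * w mu gpi gpj by lra.
  split=> //; first exact: gl Hg e1.
  by apply: Tl HT _; rewrite e2 (eT _ _ Hmu) e1.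
split.
- rewrite /ser_comp (@sum2_single _ _ (fun i j => g i j * ser_mul (ser_pow P i) (ser_pow Q j) (gpi*pa + gpj*qpa) (gpj*qpb)) gpi gpj).
  + by have [T1 _ _ _ _] := ET gpi gpj; rewrite mulf_neq0.
  + by rewrite ltnS; nia.
  + by rewrite ltnS; nia.
  move=> i j _ _; rewrite mulf_eq0 negb_or => /andP[Hg HT].
  have [e1 _ /andP[Hi _] /andP[Ha _]] := term _ _ _ _ Hg HT (eq_le_tmp (eT _ _ Hmu)).
  move: e1; rewrite /w => e1.
  have K := key_lr Hq1 e1.
  have Ha' : ((i*pa + j*qpa)%:R <= (gpi*pa + gpj*qpa)%:R :> R) by rewrite ler_nat.
  rewrite !natrD !natrM in Ha'.
  have Hi' : (gpi%:R <= i%:R :> R) by rewrite ler_nat.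
  have : (i%:R - gpi%:R) * (l * qpb%:R) <= 0 :> R.
    by rewrite -K; rewrite pmulr_rle0 //; lra.
  move=> H0.
  have Ei : (i%:R : R) = gpi%:R by nra.
  have Ei' : i = gpi by apply/eqP; rewrite -(eqr_nat R) Ei.
  subst i; split=> //.
  have : mu * j%:R = mu * gpj%:R by lra.
  by move/(mulfI (lt0r_neq0 mu0))/eqP; rewrite eqr_nat => /eqP.
- rewrite /ser_comp (@sum2_single _ _ (fun i j => g i j * ser_mul (ser_pow P i) (ser_pow Q j) (gvi*pa + gvj*qva) (gvj*qvb)) gvi gvj).
  + by have [_ T2 _ _ _] := ET gvi gvj; rewrite mulf_neq0.
  + by rewrite ltnS; nia.
  + by rewrite ltnS; nia.
  move=> i j _ _; rewrite mulf_eq0 negb_or => /andP[Hg HT].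
  have Hw : w l (gvi*pa + gvj*qva) (gvj*qvb) <= pa%:R * w mu gpi gpj.
    by rewrite (eT _ _ Hmv) ge.
  have [e1 _ /andP[_ Hi] /andP[_ Ha]] := term _ _ _ _ Hg HT Hw.
  move: e1; rewrite ge /w => e1.
  have K := key_lr Hq2 e1.
  have Ha' : ((gvi*pa + gvj*qva)%:R <= (i*pa + j*qva)%:R :> R) by rewrite ler_nat.
  rewrite !natrD !natrM in Ha'.
  have Hi' : (i%:R <= gvi%:R :> R) by rewrite ler_nat.
  have : 0 <= (i%:R - gvi%:R) * (l * qvb%:R) :> R.
    by rewrite -K; rewrite pmulr_rge0 //; lra.
  move=> H0.
  have Ei : (i%:R : R) = gvi%:R by nra.
  have Ei' : i = gvi by apply/eqP; rewrite -(eqr_nat R) Ei.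
  subst i; split=> //.
  have : mu * j%:R = mu * gvj%:R by lra.
  by move/(mulfI (lt0r_neq0 mu0))/eqP; rewrite eqr_nat => /eqP.
- by rewrite (eT _ _ Hmu) (eT _ _ Hmv) ge.
- move=> a b /comp_supp [i [j [Hg HT]]].
  have [_ _ _ Ts _] := ET i j.
  have h1 := Ts _ _ HT; rewrite (eT _ _ Hmu) in h1.
  rewrite (eT _ _ Hmu).
  have h2 := gs _ _ Hg.
  have h3 : pa%:R * w mu gpi gpj <= pa%:R * w mu i j by rewrite ler_pM2l.
  lra.
- move=> a b /comp_supp [i [j [Hg HT]]] Hw.
  rewrite (eT _ _ Hmu) in Hw.
  have [e1 _ /andP[Hi Hi2] /andP[Ha1 Ha2]] := term _ _ _ _ Hg HT (eq_le_tmp Hw).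
  apply/andP; split.
  + apply: leq_trans Ha1; apply: natr_le; rewrite !natrD !natrM.
    have K := key_lr Hq1 e1.
    have Hi' : (gpi%:R <= i%:R :> R) by rewrite ler_nat.
    have : 0 <= mu * ((i%:R * pa%:R + j%:R * qpa%:R) - (gpi%:R * pa%:R + gpj%:R * qpa%:R)) :> R.
      by rewrite K; apply: mulr_ge0; lra.
    by rewrite pmulr_rge0 //; lra.
  + apply: leq_trans Ha2 _; apply: natr_le; rewrite !natrD !natrM.
    move: e1; rewrite ge => e1.
    have K := key_lr Hq2 e1.
    have Hi' : (i%:R <= gvi%:R :> R) by rewrite ler_nat.
    have : mu * ((i%:R * pa%:R + j%:R * qva%:R) - (gvi%:R * pa%:R + gvj%:R * qva%:R)) <= 0 :> R.
      by rewrite K; apply: mulr_le0_ge0; lra.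
    by rewrite pmulr_rle0 //; lra.
Qed.

Lemma EdgeP_ext (F G : ser R) l pa pb va vb : (forall a b, F a b = G a b) ->
  EdgeP F l pa pb va vb -> EdgeP G l pa pb va vb.
Proof.
move=> E [H1 H2 H3 H4 H5]; split; rewrite -?E //.
- by move=> a b; rewrite -E; apply: H4.
- by move=> a b; rewrite -E; apply: H5.
Qed.

Lemma wEdge l : EdgeP (ser_w R) l 0 1 0 1.
Proof.
have H1 : ser_w R 0 1 != 0 by rewrite /ser_w /= oner_neq0.
split=> // a b; rewrite /ser_w; case: a => [|a]; case: b => [|[|b]] //=; rewrite ?eqxx //.
Qed.

Lemma zEdge l : EdgeP (ser_z R) l 1 0 1 0.
Proof.
have H1 : ser_z R 1 0 != 0 by rewrite /ser_z /= oner_neq0.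
split=> // a b; rewrite /ser_z; case: a => [|[|a]]; case: b => [|b] //=; rewrite ?eqxx //.
Qed.

Lemma of1Edge (pc : nat -> R[i]) (delta : nat) mu :
  (forall i, (i < delta)%N -> pc i = 0) -> pc delta != 0 ->
  EdgeP (ser_of1 pc) mu delta 0 delta 0.
Proof.
move=> Hlow Hd.
have H1 : ser_of1 pc delta 0 != 0 by rewrite /ser_of1.
have supp : forall a b, ser_of1 pc a b != 0 -> b = 0%N /\ (delta <= a)%N.
  move=> a b; rewrite /ser_of1; case: b => [|b] /=; last by rewrite eqxx.
  move=> Ha; split=> //; rewrite leqNgt; apply/negP => /Hlow E.
  by rewrite E eqxx in Ha.
split=> // a b /supp [-> Ha].
- by rewrite /w !mulr0 !addr0 ler_nat.
- by rewrite /w !mulr0 !addr0 => /eqP; rewrite eqr_nat => /eqP ->; rewrite leqnn.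
Qed.

Lemma comp_of1 (pc : nat -> R[i]) (P Q : ser R) a b :
  ser_comp (ser_of1 pc) P Q a b = ser_comp (ser_of1 pc) P (ser_w R) a b.
Proof.
rewrite /ser_comp; apply: eq_bigr => i _; apply: eq_bigr => j _.
case: (nat_of_ord j) => [|j'] //.
by rewrite /ser_of1 /= !mul0r.
Qed.

Lemma Pstep (pc : nat -> R[i]) (delta n : nat) (P Q : ser R) :
  (1 <= delta)%N -> (forall i, (i < delta)%N -> pc i = 0) -> pc delta != 0 ->
  (forall l, 0 < l -> EdgeP P l (delta ^ n) 0 (delta ^ n) 0) ->
  forall l, 0 < l -> EdgeP (ser_comp (ser_of1 pc) P Q) l (delta ^ n.+1) 0 (delta ^ n.+1) 0.
Proof.
move=> d1 Hlow Hd HP l l0.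
apply: EdgeP_ext (fun a b => esym (comp_of1 pc P Q a b)) _.
have pa0 : (0 < delta ^ n)%N by rewrite expn_gt0 d1.
have pa0r : (delta ^ n)%:R != 0 :> R by rewrite pnatr_eq0 -lt0n.
have Hm : w l 0 1 = (l / (delta ^ n)%:R) * (delta ^ n)%:R.
  by rewrite /w divfK // mulr1 add0r.
have := compEdge l0 pa0 (ltn0Sn 0) (ltn0Sn 0) (HP l l0) (wEdge l) Hm (of1Edge _ Hlow Hd).
by rewrite !muln0 !addn0 mul0n expnS.
Qed.

Lemma subr_ge0_tmp (x y : R) : y <= x -> 0 <= x - y.
Proof. by rewrite subr_ge0. Qed.

Lemma newton_pt (g : ser R) i j (e1 e2 : R) : g i j != 0 -> 0 <= e1 -> 0 <= e2 ->
  newton g (i%:R + e1, j%:R + e2).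
Proof.
move=> Hg h1 h2; exists 1%N, (fun _ => 1), (fun _ => (i%:R + e1, j%:R + e2)).
split=> [t|]; first exact: ler01.
split; first by rewrite big_ord1.
split; last by rewrite !big_ord1 !mul1r.
move=> t; exists i, j; split=> //=; split; lra.
Qed.

Lemma newton_up (g : ser R) (x : R * R) (e : R) : newton g x -> 0 <= e ->
  newton g (x.1, x.2 + e).
Proof.
case: x => x1 x2 [n [lam [pt [H0 [H1 [H2 E]]]]]] He.
exists n, lam, (fun t => ((pt t).1, (pt t).2 + e)).
split=> //; split=> //; split.
- move=> t; have [i [j [Hg [Hi Hj]]]] := H2 t.
  exists i, j; split=> //; split=> //=; lra.
- case: E => E1 E2; rewrite E1 E2 /=; congr pair.
  rewrite [X in _ = X](eq_bigr (fun t => lam t * (pt t).2 + lam t * e)); last first.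
    by move=> t _ /=; rewrite mulrDr.
  by rewrite big_split /= -mulr_suml H1 mul1r.
Qed.

Lemma newton_L (g : ser R) l c lo hi : 0 < l ->
  (forall i j, g i j != 0 -> c <= w l i j) ->
  (forall i j, g i j != 0 -> w l i j = c -> lo <= i%:R /\ i%:R <= hi) ->
  forall x, newton g x -> c <= x.1 + l * x.2 /\ (x.1 + l * x.2 = c -> lo <= x.1 /\ x.1 <= hi).
Proof.
move=> l0 Hs Hl x [n [lam [pt [H0 [H1 [H2 ->]]]]]] /=.
have Hpt t : c <= (pt t).1 + l * (pt t).2 /\
    ((pt t).1 + l * (pt t).2 = c -> lo <= (pt t).1 /\ (pt t).1 <= hi).
  have [i [j [Hg [Hi Hj]]]] := H2 t.
  have := Hs i j Hg; have := Hl i j Hg; rewrite /w => hl hc.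
  have hj : l * j%:R <= l * (pt t).2 by rewrite ler_pM2l.
  split; first lra.
  move=> Heq.
  have e1 : (pt t).1 = i%:R by lra.
  have e2 : i%:R + l * j%:R = c by lra.
  by rewrite e1; apply: hl.
have EL : \sum_t lam t * (pt t).1 + l * \sum_t lam t * (pt t).2 =
          \sum_t lam t * ((pt t).1 + l * (pt t).2).
  by rewrite mulr_sumr -big_split; apply: eq_bigr => t _ /=; ring.
have Sc : \sum_t lam t * c = c by rewrite -mulr_suml H1 mul1r.
rewrite EL; split.
- rewrite -[X in X <= _]Sc; apply: ler_sum => t _; apply: ler_wpM2l => //; exact: (Hpt t).1.
- move=> Heq.
  have Z : \sum_t lam t * ((pt t).1 + l * (pt t).2 - c) = 0.
    by rewrite (eq_bigr (fun t => lam t * ((pt t).1 + l * (pt t).2) - lam t * c)) ?sumrB ?Heq ?Sc ?subrr // => t _; rewrite mulrBr.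
  have Z2 := psumr_eq0P (fun t _ => mulr_ge0 (H0 t) (subr_ge0_tmp (Hpt t).1)) Z.
  have Ht t : lam t = 0 \/ (lo <= (pt t).1 /\ (pt t).1 <= hi).
    have := Z2 t isT; move/eqP; rewrite mulf_eq0 => /orP[/eqP->|]; first by left.
    by rewrite subr_eq0 => /eqP /(Hpt t).2 H; right.
  have Sl : \sum_t lam t * lo = lo by rewrite -mulr_suml H1 mul1r.
  have Sh : \sum_t lam t * hi = hi by rewrite -mulr_suml H1 mul1r.
  split.
  + rewrite -[X in X <= _]Sl; apply: ler_sum => t _.
    by case: (Ht t) => [->|[h _]]; rewrite ?mul0r // ler_wpM2l.
  + rewrite -[X in _ <= X]Sh; apply: ler_sum => t _.
    by case: (Ht t) => [->|[_ h]]; rewrite ?mul0r // ler_wpM2l.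
Qed.

Lemma vertex_from (g : ser R) (l c lo hi : R) i0 j0 : 0 < l ->
  (forall i j, g i j != 0 -> c <= w l i j) ->
  (forall i j, g i j != 0 -> w l i j = c -> lo <= i%:R /\ i%:R <= hi) ->
  g i0 j0 != 0 -> w l i0 j0 = c -> (i0%:R = lo \/ i0%:R = hi) ->
  is_vertex (newton g) (i0%:R, j0%:R).
Proof.
move=> l0 Hs Hl Hg Hc Hlh; split.
  by have := newton_pt Hg (lexx 0) (lexx 0); rewrite !addr0.
case=> x1 x2; case=> y1 y2 t Nx Ny /andP[t0 t1] [E1 E2].
have [Lx Lxe] := newton_L l0 Hs Hl Nx.
have [Ly Lye] := newton_L l0 Hs Hl Ny.
move: Lx Lxe Ly Lye Hc; rewrite /w /= E1 E2 => Lx Lxe Ly Lye Hc.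
have ex : x1 + l * x2 = c by nra.
have ey : y1 + l * y2 = c by nra.
have [hx1 hx2] := Lxe ex; have [hy1 hy2] := Lye ey.
have e1 : x1 = y1 by case: Hlh => H; nra.
have e2 : x2 = y2.
  have : l * x2 = l * y2 by lra.
  by move/(mulfI (lt0r_neq0 l0)).
by rewrite e1 e2.
Qed.

Lemma seg_not_vertex (g : ser R) l (a b c : R * R) : 0 < l ->
  newton g a -> newton g c -> a.1 < b.1 -> b.1 < c.1 ->
  a.1 + l * a.2 <= b.1 + l * b.2 -> c.1 + l * c.2 <= b.1 + l * b.2 ->
  ~ is_vertex (newton g) b.
Proof.
case: a => a1 a2; case: b => b1 b2; case: c => c1 c2 /= l0 Na Nc h1 h2 h3 h4 [_ Hext].
have ca : c1 - a1 != 0 by rewrite subr_eq0; apply/eqP => E; lra.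
set t := (c1 - b1) / (c1 - a1).
have t0 : 0 < t by rewrite /t divr_gt0 //; lra.
have t1 : t < 1 by rewrite /t ltr_pdivrMr; lra.
have tx : t * a1 + (1 - t) * c1 = b1 by rewrite /t; field.
set yi := t * a2 + (1 - t) * c2.
have H5 : t * (a1 + l * a2) + (1 - t) * (c1 + l * c2) <= b1 + l * b2 by nra.
have H6 : t * (a1 + l * a2) + (1 - t) * (c1 + l * c2) = b1 + l * yi by rewrite -tx /yi; ring.
have Hy : yi <= b2.
  have : l * yi <= l * b2 by lra.
  by rewrite ler_pM2l.
have He : 0 <= b2 - yi by lra.
have := Hext (a1, a2 + (b2 - yi)) (c1, c2 + (b2 - yi)) t (newton_up Na He) (newton_up Nc He).
rewrite t0 t1 /= => /(_ isT).
have E : (b1, b2) = (t * a1 + (1 - t) * c1, t * (a2 + (b2 - yi)) + (1 - t) * (c2 + (b2 - yi))).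
  by rewrite tx /yi; congr pair; ring.
by move=> /(_ E) [E1 _]; lra.
Qed.

Lemma edge_prec (g : ser R) l pa pb va vb : 0 < l -> EdgeP g l pa pb va vb -> (pa < va)%N ->
  prec_vertex (newton g) (pa%:R, pb%:R) (va%:R, vb%:R).
Proof.
move=> l0 [g1 g2 ge gs gl] pv.
have Hl : forall i j : nat, g i j != 0 -> w l i j = w l pa pb -> (pa%:R <= i%:R :> R) /\ (i%:R <= va%:R :> R).
  by move=> i j Hg Hw; have /andP[h1 h2] := gl i j Hg Hw; rewrite !ler_nat.
have pvr : pa%:R < va%:R :> R by rewrite ltr_nat.
split; [|split; [|split]].
- exact: vertex_from l0 gs Hl g1 erefl (or_introl erefl).
- exact: vertex_from l0 gs Hl g2 (esym ge) (or_intror erefl).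
- exact: pvr.
- move=> x Vx [h1 h2]; have [Nx _] := Vx.
  have [Lx _] := newton_L l0 gs Hl Nx.
  apply: (seg_not_vertex (a := (pa%:R, pb%:R)) (c := (va%:R, vb%:R)) l0 _ _ h1 h2 _ _ Vx).
  + by have := newton_pt g1 (lexx 0) (lexx 0); rewrite !addr0.
  + by have := newton_pt g2 (lexx 0) (lexx 0); rewrite !addr0.
  + exact: Lx.
  + by rewrite /= -[_ + _]/(w l va vb) -ge.
Qed.

Lemma seq_min (T : eqType) (F : T -> R) (s : seq T) : s != [::] ->
  exists x, x \in s /\ forall y, y \in s -> F x <= F y.
Proof.
elim: s => // a s IH _; case: s IH => [|b s'] IH.
  by exists a; split; [rewrite mem_head | move=> y; rewrite inE => /eqP->].
have [x [xin Hx]] := IH isT.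
case: (leP (F a) (F x)) => h.
- exists a; split; first exact: mem_head.
  move=> y; rewrite inE => /orP[/eqP->//|/Hx]; exact: le_trans h.
- exists x; split; first by rewrite inE xin orbT.
  move=> y; rewrite inE => /orP[/eqP->|/Hx//]; exact: ltW.
Qed.

Lemma minvertex_pt (g : ser R) (l : R) (dir : bool) i1 j1 : 0 < l -> g i1 j1 != 0 ->
  exists i0 j0, [/\ g i0 j0 != 0,
    (forall i j, g i j != 0 -> w l i0 j0 <= w l i j) &
    (forall i j, g i j != 0 -> w l i j = w l i0 j0 -> if dir then (i0 <= i)%N else (i <= i0)%N)].
Proof.
move=> l0 H1.
set w1 := w l i1 j1.
have w10 : 0 <= w1 by rewrite /w1 /w; apply: addr_ge0 => //; apply: mulr_ge0 => //; exact: ltW.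
set K := (Num.Def.archi_bound w1 + Num.Def.archi_bound (w1 / l))%N.
have inK : forall i j, g i j != 0 -> w l i j <= w1 -> (i < K)%N /\ (j < K)%N.
  move=> i j _ Hw; have hj : 0 <= l * j%:R by apply: mulr_ge0 => //; exact: ltW.
  have b1 := archi_boundP w10.
  have b2 := archi_boundP (divr_ge0 w10 (ltW l0)).
  split.
  + have : (i%:R < (Num.Def.archi_bound w1)%:R :> R) by move: Hw; rewrite /w; lra.
    by rewrite ltr_nat => h; apply: leq_trans h _; rewrite /K leq_addr.
  + have : (j%:R < (Num.Def.archi_bound (w1 / l))%:R :> R).
      apply: le_lt_trans b2; rewrite ler_pdivlMr //.
      move: Hw; rewrite /w; have := ler0n R i; lra.
    by rewrite ltr_nat => h; apply: leq_trans h _; rewrite /K leq_addl.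
set s0 := [seq (i, j) | i <- iota 0 K, j <- iota 0 K].
have ins0 : forall i j, (i < K)%N -> (j < K)%N -> (i, j) \in s0.
  by move=> i j hi hj; apply/allpairsP; exists (i, j); rewrite !mem_iota /= hi hj.
set s := [seq x <- s0 | g x.1 x.2 != 0].
have ins : forall i j, g i j != 0 -> w l i j <= w1 -> (i, j) \in s.
  move=> i j Hg Hw; have [hi hj] := inK i j Hg Hw.
  by rewrite mem_filter /= Hg ins0.
have i1s : (i1, j1) \in s by apply: ins => //; exact: lexx.
have sne : s != [::] by apply/negP => /eqP E; rewrite E in i1s.
have [xs [xin Hx]] := seq_min (fun x => w l x.1 x.2) sne.
set s2 := [seq x <- s | w l x.1 x.2 == w l xs.1 xs.2].
have xs2 : xs \in s2 by rewrite mem_filter eqxx xin.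
have s2ne : s2 != [::] by apply/negP => /eqP E; rewrite E in xs2.
have [x2 [x2in Hx2]] := seq_min (fun x => if dir then (x.1)%:R else - (x.1)%:R : R) s2ne.
move: (x2in); rewrite mem_filter => /andP[/eqP Ew x2s].
move: (x2s); rewrite mem_filter => /andP[Hg2 _].
have xs_le : w l xs.1 xs.2 <= w1 := Hx _ i1s.
exists x2.1, x2.2; split.
- exact: Hg2.
- move=> i j Hg; rewrite Ew; case: (leP (w l i j) w1) => h.
  + exact: (Hx _ (ins i j Hg h)).
  + exact: (le_trans xs_le (ltW h)).
- move=> i j Hg Hw.
  have Hin : (i, j) \in s2.
    by rewrite mem_filter /= Hw Ew eqxx ins // Hw Ew.
  by have := Hx2 _ Hin; case: (dir) => /=; rewrite ?lerN2 ler_nat.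
Qed.

Lemma minvtx (g : ser R) (l : R) (dir : bool) i1 j1 : 0 < l -> g i1 j1 != 0 ->
  exists i0 j0, [/\ g i0 j0 != 0,
    (forall i j, g i j != 0 -> w l i0 j0 <= w l i j),
    (forall i j, g i j != 0 -> w l i j = w l i0 j0 -> if dir then (i0 <= i)%N else (i <= i0)%N),
    is_vertex (newton g) (i0%:R, j0%:R) &
    (forall x, newton g x -> w l i0 j0 <= x.1 + l * x.2 /\
       (x.1 + l * x.2 = w l i0 j0 -> if dir then i0%:R <= x.1 else x.1 <= i0%:R))].
Proof.
move=> l0 H1.
have [i0 [j0 [H0 Hmin Htie]]] := minvertex_pt dir l0 H1.
exists i0, j0.
have hj : forall j : nat, 0 <= l * j%:R by move=> j; apply: mulr_ge0 => //; exact: ltW.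
case: dir Htie => /= Htie.
- have Hl : forall i j : nat, g i j != 0 -> w l i j = w l i0 j0 ->
      (i0%:R <= i%:R :> R) /\ i%:R <= w l i0 j0.
    move=> i j Hg Hw; split; first by rewrite ler_nat; exact: (Htie i j Hg Hw).
    by rewrite -Hw /w; have := hj j; lra.
  split=> //.
  + exact: vertex_from l0 Hmin Hl H0 erefl (or_introl erefl).
  + move=> x Nx; have [h1 h2] := newton_L l0 Hmin Hl Nx.
    by split=> // /h2 [].
- have Hl : forall i j : nat, g i j != 0 -> w l i j = w l i0 j0 ->
      (0 <= i%:R :> R) /\ (i%:R <= i0%:R :> R).
    by move=> i j Hg Hw; split; [exact: ler0n | rewrite ler_nat; exact: (Htie i j Hg Hw)].
  split=> //.
  + exact: vertex_from l0 Hmin Hl H0 erefl (or_intror erefl).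
  + move=> x Nx; have [h1 h2] := newton_L l0 Hmin Hl Nx.
    by split=> // /h2 [].
Qed.

Lemma mono_v (vn vm : nat -> nat) s :
  (forall i, (1 <= i < s)%N -> (vn i < vn i.+1)%N /\ (vm i.+1 < vm i)%N) ->
  forall i j, (1 <= i)%N -> (i < j)%N -> (j <= s)%N -> (vn i < vn j)%N /\ (vm j < vm i)%N.
Proof.
move=> H i j hi; elim: j => // j IH hij hjs.
have js : (j < s)%N by [].
move: hij; rewrite ltnS leq_eqVlt => /orP[/eqP E|hij].
  by subst j; apply: H; rewrite hi js.
have [h1 h2] := IH hij (ltnW js).
have [h3 h4] : (vn j < vn j.+1)%N /\ (vm j.+1 < vm j)%N.
  by apply: H; rewrite js andbT; apply: leq_trans hi (ltnW hij).
split; [exact: ltn_trans h1 h3 | exact: ltn_trans h4 h2].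
Qed.

Lemma edge_of_vertices (q : ser R) (s : nat) (vn vm : nat -> nat) m :
  (exists i j, q i j != 0) ->
  (forall i, (1 <= i < s)%N -> (vn i < vn i.+1)%N /\ (vm i.+1 < vm i)%N) ->
  (forall v : R * R, is_vertex (newton q) v <->
     exists i, (1 <= i <= s)%N /\ v = ((vn i)%:R, (vm i)%:R)) ->
  (1 <= m < s)%N ->
  EdgeP q (((vn m.+1)%:R - (vn m)%:R) / ((vm m)%:R - (vm m.+1)%:R)) (vn m) (vm m) (vn m.+1) (vm m.+1).
Proof.
move=> [i1 [j1 Hq1]] Hmono Hv /andP[m1 ms].
set l := (_ / _).
have Mo := mono_v Hmono.
have [hn hm] := Hmono m (introT andP (conj m1 ms)).
have l0 : 0 < l by rewrite /l divr_gt0 // subr_gt0 ltr_nat.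
set c := w l (vn m) (vm m).
have ec2 : w l (vn m.+1) (vm m.+1) = c.
  rewrite /c /w /l; have : (vm m)%:R - (vm m.+1)%:R != 0 :> R.
    by rewrite subr_eq0 eqr_nat; apply/negP => /eqP E; rewrite E ltnn in hm.
  by move=> Hne; field.
have hm1 : (1 <= m <= s)%N by rewrite m1 ltnW.
have hm2 : (1 <= m.+1 <= s)%N by rewrite ms.
have V : forall m', (1 <= m' <= s)%N -> is_vertex (newton q) ((vn m')%:R, (vm m')%:R).
  by move=> m' h; apply/(Hv _); exists m'.
have N : forall m', (1 <= m' <= s)%N -> newton q ((vn m')%:R, (vm m')%:R).
  by move=> m' h; have [] := V m' h.
have Vidx : forall i0 j0 : nat, is_vertex (newton q) (i0%:R, j0%:R) ->
    exists m', (1 <= m' <= s)%N /\ i0 = vn m' /\ j0 = vm m'.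
  move=> i0 j0 /(Hv _) [m' [hm' [E1 E2]]]; exists m'; split=> //.
  by split; apply/eqP; rewrite -(eqr_nat R) ?E1 ?E2.
have Mr : forall i j, (1 <= i)%N -> (i < j)%N -> (j <= s)%N -> (vn i)%:R < (vn j)%:R :> R.
  by move=> i j h1 h2 h3; rewrite ltr_nat; exact: (Mo i j h1 h2 h3).1.
have hnr : (vn m)%:R < (vn m.+1)%:R :> R by rewrite ltr_nat.
have H5a' : forall m', (1 <= m' <= s)%N -> c <= w l (vn m') (vm m').
  move=> m' /andP[h1 h2]; rewrite leNgt; apply/negP => Hlt.
  have hm' : (1 <= m' <= s)%N by rewrite h1 h2.
  case: (ltngtP m' m) => [hlt|hgt|heq].
  - apply: (seg_not_vertex (a := ((vn m')%:R, (vm m')%:R)) (c := ((vn m.+1)%:R, (vm m.+1)%:R))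
        l0 (N m' hm') (N m.+1 hm2) _ _ _ _ (V m hm1)) => /=.
    + exact: Mr h1 hlt (ltnW ms).
    + exact: hnr.
    + exact: ltW Hlt.
    + by change (w l (vn m.+1) (vm m.+1) <= w l (vn m) (vm m)); rewrite ec2 lexx.
  - move: hgt; rewrite leq_eqVlt => /orP[/eqP E|hgt].
      by subst m'; rewrite ec2 ltxx in Hlt.
    apply: (seg_not_vertex (a := ((vn m)%:R, (vm m)%:R)) (c := ((vn m')%:R, (vm m')%:R))
        l0 (N m hm1) (N m' hm') _ _ _ _ (V m.+1 hm2)) => /=.
    + exact: hnr.
    + exact: Mr (leq_trans m1 (leqnSn m)) hgt h2.
    + by change (w l (vn m) (vm m) <= w l (vn m.+1) (vm m.+1)); rewrite ec2 lexx.
    + by change (w l (vn m') (vm m') <= w l (vn m.+1) (vm m.+1)); rewrite ec2; exact: ltW Hlt.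
  - by subst m'; rewrite ltxx in Hlt.
have Hs : forall i j, q i j != 0 -> c <= w l i j.
  move=> i j Hq; rewrite leNgt; apply/negP => Hlt.
  have [i0 [j0 [H0 Hmin _ Hvx _]]] := minvtx true l0 Hq.
  have [m' [hm' [E1 E2]]] := Vidx _ _ Hvx.
  have := H5a' m' hm'; have := Hmin i j Hq; rewrite E1 E2; lra.
have Hl : forall i j, q i j != 0 -> w l i j = c -> (vn m <= i <= vn m.+1)%N.
  move=> i j Hq Hw; apply/andP; split; rewrite leqNgt; apply/negP => Hlt.
  - have [i0 [j0 [H0 Hmin Htie Hvx _]]] := minvtx true l0 Hq.
    have e0 : w l i0 j0 = c.
      by apply/eqP; rewrite eq_le Hs // -Hw Hmin.
    have hi0 : (i0 <= i)%N := Htie i j Hq (etrans Hw (esym e0)).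
    have [m' [hm' [E1 E2]]] := Vidx _ _ Hvx.
    case: (ltnP m' m) => hmm.
    + apply: (seg_not_vertex (a := ((vn m')%:R, (vm m')%:R)) (c := ((vn m.+1)%:R, (vm m.+1)%:R))
          l0 (N m' hm') (N m.+1 hm2) _ _ _ _ (V m hm1)) => /=.
      * by case/andP: hm' => h1 _; exact: Mr h1 hmm (ltnW ms).
      * exact: hnr.
      * by change (w l (vn m') (vm m') <= w l (vn m) (vm m)); rewrite -E1 -E2 e0 lexx.
      * by change (w l (vn m.+1) (vm m.+1) <= w l (vn m) (vm m)); rewrite ec2 lexx.
    + have : (vn m <= vn m')%N.
        move: hmm; rewrite leq_eqVlt => /orP[/eqP->//|hmm].
        by case/andP: hm' => _ h2; exact: ltnW (Mo m m' m1 hmm h2).1.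
      by rewrite -E1 => h; have := leq_trans h hi0; rewrite leqNgt Hlt.
  - have [i0 [j0 [H0 Hmin Htie Hvx _]]] := minvtx false l0 Hq.
    have e0 : w l i0 j0 = c.
      by apply/eqP; rewrite eq_le Hs // -Hw Hmin.
    have hi0 : (i <= i0)%N := Htie i j Hq (etrans Hw (esym e0)).
    have [m' [hm' [E1 E2]]] := Vidx _ _ Hvx.
    case: (ltnP m.+1 m') => hmm.
    + apply: (seg_not_vertex (a := ((vn m)%:R, (vm m)%:R)) (c := ((vn m')%:R, (vm m')%:R))
          l0 (N m hm1) (N m' hm') _ _ _ _ (V m.+1 hm2)) => /=.
      * exact: hnr.
      * by case/andP: hm' => _ h2; exact: Mr (leq_trans m1 (leqnSn m)) hmm h2.
      * by change (w l (vn m) (vm m) <= w l (vn m.+1) (vm m.+1)); rewrite ec2 lexx.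
      * by change (w l (vn m') (vm m') <= w l (vn m.+1) (vm m.+1)); rewrite -E1 -E2 e0 ec2 lexx.
    + have : (vn m' <= vn m.+1)%N.
        move: hmm; rewrite leq_eqVlt => /orP[/eqP<-//|hmm].
        by case/andP: hm' => h1 _; exact: ltnW (Mo m' m.+1 h1 hmm ms).1.
      by rewrite -E1 => h; have := leq_trans hi0 h; rewrite leqNgt Hlt.
split.
- have [i0 [j0 [H0 Hmin Htie Hvx HN]]] := minvtx true l0 Hq1.
  have [L1 L2] := HN _ (N m hm1); rewrite /= in L1 L2.
  have e0 : w l i0 j0 = c by apply/eqP; rewrite eq_le Hs // L1.
  have h1 := L2 (esym e0).
  have /andP[h2 _] := Hl i0 j0 H0 e0.
  have Ei : i0 = vn m by apply/eqP; rewrite eqn_leq h2 -(ler_nat R) h1.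
  subst i0; have Ej : j0 = vm m by exact: w_inj l0 e0.
  by rewrite -Ej.
- have [i0 [j0 [H0 Hmin Htie Hvx HN]]] := minvtx false l0 Hq1.
  have [L1 L2] := HN _ (N m.+1 hm2); rewrite /= in L1 L2.
  have e0 : w l i0 j0 = w l (vn m.+1) (vm m.+1).
    by apply/eqP; rewrite eq_le ec2 Hs // -ec2 L1.
  have h1 := L2 (esym e0).
  have /andP[_ h2] := Hl i0 j0 H0 (etrans e0 ec2).
  have Ei : i0 = vn m.+1 by apply/eqP; rewrite eqn_leq h2 -(ler_nat R) h1.
  subst i0; have Ej : j0 = vm m.+1 by exact: w_inj l0 e0.
  by rewrite -Ej.
- by rewrite ec2.
- exact: Hs.
- exact: Hl.
Qed.

Lemma mid_edge (q : ser R) (l1 l2 mu : R) A B g d a3 b3 :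
  EdgeP q l1 A B g d -> EdgeP q l2 g d a3 b3 -> l1 < mu -> mu < l2 ->
  EdgeP q mu g d g d.
Proof.
move=> [_ q2 e1 s1 _] [_ _ _ s2 _] h1 h2.
have key : forall i j, q i j != 0 -> w mu g d <= w mu i j /\ (w mu i j = w mu g d -> i = g).
  move=> i j Hq.
  have := s1 i j Hq; have := s2 i j Hq; rewrite e1 /w => hs2 hs1.
  case: (leP (d%:R : R) j%:R) => hj.
  - split; first nra.
    move=> Heq.
    have ej : (j%:R : R) = d%:R by nra.
    have ei : (i%:R : R) = g%:R by nra.
    by apply/eqP; rewrite -(eqr_nat R) ei.
  - split; first nra.
    by move=> Heq; exfalso; nra.
split=> //.
- by move=> a b /key [].
- by move=> a b Hq /(key _ _ Hq).2 ->; rewrite leqnn.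
Qed.

Lemma EdgeP_eq (F : ser R) l pa pb va vb pa' pb' va' vb' :
  pa = pa' -> pb = pb' -> va = va' -> vb = vb' ->
  EdgeP F l pa pb va vb -> EdgeP F l pa' pb' va' vb'.
Proof. by move=> -> -> -> ->. Qed.

Lemma gsumS (a b : R) n : gsum a b n.+1 = a ^+ n + b * gsum a b n.
Proof.
rewrite /gsum big_ord_recl /= subn0 expr0 mulr1; congr (_ + _).
rewrite mulr_sumr; apply: eq_bigr => i _ /=.
rewrite /bump leq0n add1n.
have -> : (n - i.+1 = n.-1 - i)%N by lia.
rewrite exprS; ring.
Qed.

Lemma gsum_mul (a b : R) n : (a - b) * gsum a b n = a ^+ n - b ^+ n.
Proof.
elim: n => [|n IH]; first by rewrite /gsum big_ord0 mulr0 !expr0 subrr.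
rewrite gsumS mulrDr mulrCA IH !exprS; ring.
Qed.

Lemma gsum_ge0 (a b : R) n : 0 <= a -> 0 <= b -> 0 <= gsum a b n.
Proof.
move=> ha hb; rewrite /gsum; apply: sumr_ge0 => i _.
by apply: mulr_ge0; apply: exprn_ge0.
Qed.

Lemma gsum_gt0 (a b : R) n : 0 < a -> 0 <= b -> 0 < gsum a b n.+1.
Proof.
move=> ha hb; rewrite gsumS.
have := gsum_ge0 n (ltW ha) hb; have := exprn_gt0 n ha.
move=> h1 h2; have : 0 <= b * gsum a b n by apply: mulr_ge0.
lra.
Qed.

Lemma slope_int (p1 p2 v1 v2 l : R) : 0 < l -> p1 + l * p2 = v1 + l * v2 -> p1 < v1 ->
  slope (p1, p2) (v1, v2) = - l^-1 /\ yintercept (p1, p2) (v1, v2) = (p1 + l * p2) / l.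
Proof.
move=> l0 He hp.
have hv : v1 - p1 != 0 by rewrite subr_eq0; apply/eqP => E; lra.
have l0' : l != 0 by rewrite lt0r_neq0.
have Es : slope (p1, p2) (v1, v2) = - l^-1.
  rewrite /slope /=.
  have E : l * (v2 - p2) = - (v1 - p1) by lra.
  have -> : v2 - p2 = - (v1 - p1) / l by apply: (mulfI l0'); rewrite E; field.
  by field; rewrite hv l0'.
split=> //; rewrite /yintercept Es /=; field; exact: l0'.
Qed.
End S1.

Fixpoint va (g d dl n : nat) : nat := if n is n'.+1 then (g * dl ^ n' + d * va g d dl n')%N else 0%N.
Fixpoint pa1 (A g d dl n : nat) : nat :=
  match n with 0 => 0%N | n'.+1 => if n' is 0 then A else (g * dl ^ n' + d * pa1 A g d dl n')%N end.
Definition pb1 (B d n : nat) : nat := if n is n'.+1 then (B * d ^ n')%N else 1%N.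
Fixpoint pa2 (A B dl n : nat) : nat := if n is n'.+1 then (A * dl ^ n' + B * pa2 A B dl n')%N else 0%N.

Section S2.
Variable R : realType.

Lemma va_r g d dl n : ((va g d dl n)%:R : R) = g%:R * gsum dl%:R d%:R n.
Proof.
elim: n => [|n IH]; first by rewrite /gsum big_ord0 mulr0.
by rewrite /= natrD !natrM IH natrX gsumS; ring.
Qed.

Lemma pa1_r A g d dl n : ((pa1 A g d dl n.+1)%:R : R) =
  g%:R * gsum dl%:R d%:R n.+1 - (g%:R - A%:R) * d%:R ^+ n.
Proof.
elim: n => [|n IH].
  rewrite /= gsumS /gsum big_ord0 !expr0 mulr0 addr0 !mulr1; lra.
rewrite [pa1 _ _ _ _ _]/= natrD !natrM IH natrX !gsumS !exprS; ring.
Qed.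

Lemma pa2_r A B dl n : ((pa2 A B dl n)%:R : R) = gsum dl%:R B%:R n * A%:R.
Proof.
elim: n => [|n IH]; first by rewrite /gsum big_ord0 mul0r.
by rewrite /= natrD !natrM IH natrX gsumS; ring.
Qed.
End S2.

Section S3.
Variable R : realType.

Lemma core_i (pc : nat -> R[i]) (dl : nat) (q : ser R) (A B g d a3 b3 : nat) (l1 l2 : R) :
  (1 <= dl)%N -> (forall i, (i < dl)%N -> pc i = 0) -> pc dl != 0 ->
  0 < l1 -> l1 < l2 -> EdgeP q l1 A B g d -> EdgeP q l2 g d a3 b3 ->
  (0 < B)%N -> (0 < d)%N ->
  l1 * dl%:R < w l1 g d -> w l2 g d <= l2 * dl%:R ->
  forall n, (forall l, 0 < l -> EdgeP (skew_iter pc q n).1 l (dl ^ n) 0 (dl ^ n) 0) /\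
    EdgeP (skew_iter pc q n).2 l1 (pa1 A g d dl n) (pb1 B d n) (va g d dl n) (d ^ n).
Proof.
move=> d1 Hlow Hd l10 l12 E1 E2 B0 d0 Hi Hk.
elim=> [|n [IHP IHQ]].
  split; first by move=> l l0; rewrite expn0; exact: zEdge.
  by rewrite /= expn0; exact: wEdge.
split; first exact: Pstep d1 Hlow Hd IHP.
have pa0 : (0 < dl ^ n)%N by rewrite expn_gt0 d1.
have pa0r : 0 < ((dl ^ n)%:R : R) by rewrite ltr0n.
have qvb0 : (0 < d ^ n)%N by rewrite expn_gt0 d0.
case: n IHP IHQ pa0 pa0r qvb0 => [|n] IHP IHQ pa0 pa0r qvb0.
- have qpb0 : (0 < pb1 B d 0)%N by [].
  have Hmu : w l1 (pa1 A g d dl 0) (pb1 B d 0) = l1 * (dl ^ 0)%:R.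
    by rewrite /w /= expn0; ring.
  have := compEdge l10 pa0 qpb0 qvb0 (IHP l1 l10) IHQ Hmu E1.
  apply: EdgeP_eq; by rewrite /= ?expn0 ?expn1 ?muln1 ?muln0 ?addn0.
- have qpb0 : (0 < pb1 B d n.+1)%N by rewrite /= muln_gt0 B0 expn_gt0 d0.
  set cn := w l1 (va g d dl n.+1) (d ^ n.+1).
  have [_ _ Qe _ _] := IHQ.
  set mu := cn / (dl ^ n.+1)%:R.
  have Hmu : w l1 (pa1 A g d dl n.+1) (pb1 B d n.+1) = mu * (dl ^ n.+1)%:R.
    by rewrite Qe /mu divfK // lt0r_neq0.
  set G := gsum (dl%:R : R) d%:R n.+1.
  have G0 : 0 < G by apply: gsum_gt0; rewrite ?ltr0n ?ler0n.
  have hG := gsum_mul (dl%:R : R) d%:R n.+1.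
  have ecn : cn = g%:R * G + l1 * d%:R ^+ n.+1 by rewrite /cn /w va_r natrX.
  have edl : ((dl ^ n.+1)%:R : R) = dl%:R ^+ n.+1 by rewrite natrX.
  have dn0 : 0 < (d%:R : R) ^+ n.+1 by rewrite exprn_gt0 // ltr0n.
  have hmu1 : l1 < mu.
    rewrite /mu ltr_pdivlMr // ecn edl.
    move: Hi; rewrite /w => Hi.
    have h1 : l1 * ((dl%:R - d%:R) * G) = l1 * (dl%:R ^+ n.+1 - d%:R ^+ n.+1) by rewrite hG.
    nra.
  have hmu2 : mu < l2.
    rewrite /mu ltr_pdivrMr // ecn edl.
    move: Hk; rewrite /w => Hk.
    have h1 : l2 * ((dl%:R - d%:R) * G) = l2 * (dl%:R ^+ n.+1 - d%:R ^+ n.+1) by rewrite hG.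
    nra.
  have := compEdge l10 pa0 qpb0 qvb0 (IHP l1 l10) IHQ Hmu (mid_edge E1 E2 hmu1 hmu2).
  apply: EdgeP_eq => //; first [by rewrite /= expnS mulnCA | by rewrite expnS].
Qed.

Lemma core_ii (pc : nat -> R[i]) (dl : nat) (q : ser R) (A B g d : nat) (l1 : R) :
  (1 <= dl)%N -> (forall i, (i < dl)%N -> pc i = 0) -> pc dl != 0 ->
  0 < l1 -> EdgeP q l1 A B g d -> (0 < B)%N -> (0 < d)%N ->
  w l1 A B = l1 * dl%:R ->
  forall n, [/\ (forall l, 0 < l -> EdgeP (skew_iter pc q n).1 l (dl ^ n) 0 (dl ^ n) 0),
    EdgeP (skew_iter pc q n).2 l1 (pa2 A B dl n) (B ^ n) (va g d dl n) (d ^ n) &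
    w l1 (pa2 A B dl n) (B ^ n) = l1 * (dl ^ n)%:R].
Proof.
move=> d1 Hlow Hd l10 E1 B0 d0 HAB.
elim=> [|n [IHP IHQ IHw]].
  split; first by move=> l l0; rewrite expn0; exact: zEdge.
  - by rewrite /= !expn0; exact: wEdge.
  - by rewrite /w /= !expn0; ring.
have pa0 : (0 < dl ^ n)%N by rewrite expn_gt0 d1.
have qvb0 : (0 < d ^ n)%N by rewrite expn_gt0 d0.
have qpb0 : (0 < B ^ n)%N by rewrite expn_gt0 B0.
split.
- exact: Pstep d1 Hlow Hd IHP.
- have := compEdge l10 pa0 qpb0 qvb0 (IHP l1 l10) IHQ IHw E1.
  by apply: EdgeP_eq => //; rewrite expnS.
- rewrite [pa2 _ _ _ _]/= expnS (eT A B IHw) HAB expnS natrM; ring.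
Qed.
End S3.

Unset Implicit Arguments.

Theorem proposition6 (R : realType) (pc : nat -> R[i]) (delta : nat)
  (q : ser R) (s : nat) (vn vm : nat -> nat) (k : nat) :
  (* f = (p, q) is a holomorphic skew product germ fixing the origin *)
  convergent1 pc -> convergent2 q ->
  (1 <= delta)%N -> (forall i, (i < delta)%N -> pc i = 0) -> pc delta != 0 ->
  q 0%N 0%N = 0 -> (exists i j, q i j != 0) ->
  (* (vn 1, vm 1), ..., (vn s, vm s) are the vertices of N(q) *)
  (forall i, (1 <= i < s)%N -> (vn i < vn i.+1)%N /\ (vm i.+1 < vm i)%N) ->
  (forall v : R * R, is_vertex (newton q) v <->
     exists i, (1 <= i <= s)%N /\ v = ((vn i)%:R, (vm i)%:R)) ->
  (* Case 4 with index k *)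
  (2 < s)%N -> (2 <= k <= s.-1)%N ->
  yintercept (R:=R) ((vn k)%:R, (vm k)%:R) ((vn k.+1)%:R, (vm k.+1)%:R) <= delta%:R ->
  delta%:R <= yintercept (R:=R) ((vn k.-1)%:R, (vm k.-1)%:R) ((vn k)%:R, (vm k)%:R) ->
  let gam : R := (vn k)%:R in
  let d : R := (vm k)%:R in
  let A : R := (vn k.-1)%:R in
  let B : R := (vm k.-1)%:R in
  let l1 : R := ((vn k)%:R - (vn k.-1)%:R) / ((vm k.-1)%:R - (vm k)%:R) in
  let T_prev : R := yintercept (A, B) (gam, d) in
  let gam_n (n : nat) : R := gam * gsum delta%:R d n in
  (* (i) *)
  (delta%:R < T_prev ->
    forall n : nat, (1 <= n)%N ->
      let P := (gam_n n - (gam - A) * d ^+ n.-1, B * d ^+ n.-1) in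
      let V := (gam_n n, d ^+ n) in
      prec_vertex (newton (Qn pc q n)) P V /\
      slope P V = - l1^-1 /\
      (delta%:R : R) ^+ n < yintercept P V) /\
  (* (ii) *)
  (delta%:R = T_prev ->
    forall n : nat, (1 <= n)%N ->
      let P := (gsum delta%:R B n * A, B ^+ n) in
      let V := (gam_n n, d ^+ n) in
      prec_vertex (newton (Qn pc q n)) P V /\
      slope P V = - l1^-1 /\
      (delta%:R : R) ^+ n = yintercept P V).
Proof.
move=> _ _ d1 Hlow Hd _ Hex Hmono Hv s2 /andP[k2 ks] HTk HTk1 gam d A B l1 T_prev gam_n.
rewrite /gam_n /T_prev /gam /d /A /B /l1; clear gam_n T_prev gam d A B l1.
have k1 : (0 < k)%N by apply: ltnW.
have hk1 : (1 <= k.-1 < s)%N by lia.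
have hk : (1 <= k < s)%N by lia.
have E1 := edge_of_vertices Hex Hmono Hv hk1; rewrite prednK // in E1.
have E2 := edge_of_vertices Hex Hmono Hv hk.
have [mA mB] := Hmono _ hk1; rewrite prednK // in mA mB.
have [mg md] := Hmono _ hk.
move: E1 E2 mA mB mg md HTk HTk1.
set A := vn k.-1; set B := vm k.-1; set g := vn k; set d := vm k.
set a3 := vn k.+1; set b3 := vm k.+1.
set l1 := (g%:R - A%:R) / (B%:R - d%:R).
set l2 := (a3%:R - g%:R) / (d%:R - b3%:R).
move=> E1 E2 mA mB mg md HTk HTk1.
have l10 : 0 < l1 by rewrite /l1 divr_gt0 // subr_gt0 ltr_nat.
have B0 : (0 < B)%N by lia.
have d0 : (0 < d)%N by lia.
have l12 : l1 < l2.
  have [_ q3 _ _ _] := E2; have [_ _ e1 s1 ll1] := E1.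
  have h := s1 _ _ q3; rewrite e1 in h.
  have hne : w l1 g d != w l1 a3 b3.
    apply/eqP => Heq; have /andP[_ h'] := ll1 _ _ q3 (etrans (esym Heq) (esym e1)).
    by move: mg; rewrite ltnNge h'.
  have hlt : w l1 g d < w l1 a3 b3 by rewrite lt_neqAle hne h.
  rewrite /l2 ltr_pdivlMr; last by rewrite subr_gt0 ltr_nat.
  by move: hlt; rewrite /w; lra.
have l20 : 0 < l2 by apply: lt_trans l12.
have [_ _ e1 _ _] := E1; have [_ _ e2 _ _] := E2.
have Tp : yintercept (A%:R, B%:R) (g%:R, d%:R) = w l1 A B / l1 :> R.
  by have := (slope_int l10 e1 (_ : A%:R < g%:R)).2; rewrite ltr_nat => /(_ mA).
have Tk : yintercept (g%:R, d%:R) (a3%:R, b3%:R) = w l2 g d / l2 :> R.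
  by have := (slope_int l20 e2 (_ : g%:R < a3%:R)).2; rewrite ltr_nat => /(_ mg).
split.
- move=> Hi n n1.
  have Hi' : l1 * delta%:R < w l1 g d.
    by move: Hi; rewrite Tp ltr_pdivlMr // mulrC e1.
  have Hk' : w l2 g d <= l2 * delta%:R.
    by move: HTk; rewrite Tk ler_pdivrMr // mulrC.
  have [_ EQ] := core_i d1 Hlow Hd l10 l12 E1 E2 B0 d0 Hi' Hk' n.
  case: n n1 EQ => // n _ EQ.
  have EP : (g%:R * gsum delta%:R d%:R n.+1 - (g%:R - A%:R) * d%:R ^+ n, B%:R * d%:R ^+ n)
      = ((pa1 A g d delta n.+1)%:R, (pb1 B d n.+1)%:R) :> R * R.
    by rewrite pa1_r /= natrM natrX.
  have EV : (g%:R * gsum delta%:R d%:R n.+1, d%:R ^+ n.+1) = ((va g d delta n.+1)%:R, (d ^ n.+1)%:R) :> R * R.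
    by rewrite va_r natrX.
  rewrite /= EP EV.
  have [_ _ Qe _ _] := EQ.
  have hpv : (pa1 A g d delta n.+1)%:R < (va g d delta n.+1)%:R :> R.
    rewrite pa1_r va_r.
    have : 0 < (g%:R - A%:R) * d%:R ^+ n :> R.
      by apply: mulr_gt0; rewrite ?subr_gt0 ?ltr_nat ?exprn_gt0 ?ltr0n.
    lra.
  have [Es Ei] := slope_int l10 Qe hpv.
  split; first by apply: edge_prec l10 EQ _; rewrite -(ltr_nat R).
  split; first exact: Es.
  have Qe' : (pa1 A g d delta n.+1)%:R + l1 * (pb1 B d n.+1)%:R = w l1 (va g d delta n.+1) (d ^ n.+1) := Qe.
  rewrite Ei Qe' ltr_pdivlMr // /w va_r !natrX.
  set G := gsum (delta%:R : R) d%:R n.+1.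
  have G0 : 0 < G by apply: gsum_gt0; rewrite ?ltr0n ?ler0n.
  have hG := gsum_mul (delta%:R : R) d%:R n.+1.
  move: Hi'; rewrite /w => Hi'.
  have h1 : l1 * ((delta%:R - d%:R) * G) = l1 * (delta%:R ^+ n.+1 - d%:R ^+ n.+1) by rewrite hG.
  nra.
- move=> Hii n n1.
  have HAB : w l1 A B = l1 * delta%:R.
    by rewrite Hii Tp mulrC divfK // lt0r_neq0.
  have [_ EQ Ew] := core_ii d1 Hlow Hd l10 E1 B0 d0 HAB n.
  case: n n1 EQ Ew => // n _ EQ Ew.
  have EP : (gsum delta%:R B%:R n.+1 * A%:R, B%:R ^+ n.+1) = ((pa2 A B delta n.+1)%:R, (B ^ n.+1)%:R) :> R * R.
    by rewrite pa2_r natrX.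
  have EV : (g%:R * gsum delta%:R d%:R n.+1, d%:R ^+ n.+1) = ((va g d delta n.+1)%:R, (d ^ n.+1)%:R) :> R * R.
    by rewrite va_r natrX.
  rewrite /= EP EV.
  have [_ _ Qe _ _] := EQ.
  have hBd : (d ^ n.+1)%:R < (B ^ n.+1)%:R :> R by rewrite ltr_nat ltn_exp2r.
  have hpv : (pa2 A B delta n.+1)%:R < (va g d delta n.+1)%:R :> R.
    have : 0 < l1 * ((B ^ n.+1)%:R - (d ^ n.+1)%:R) by rewrite mulr_gt0 // subr_gt0.
    move: Qe; rewrite /w; lra.
  have [Es Ei] := slope_int l10 Qe hpv.
  split; first by apply: edge_prec l10 EQ _; rewrite -(ltr_nat R).
  split; first exact: Es.
  have Ew' : (pa2 A B delta n.+1)%:R + l1 * (B ^ n.+1)%:R = l1 * (delta ^ n.+1)%:R := Ew.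
  rewrite Ei Ew' natrX; field; exact: lt0r_neq0.
Qed.
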